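(* Let $\Bbbk$ be a field of characteristic $0$, $n\ge2$, and let $(A,\mu,\alpha)$ be a multiplicative $n$-ary totally Hom-associative algebra over $\Bbbk$. Define $(2^k(n-1)+1)$-ary products $\mu^{(k)}$ inductively by $\mu^{(0)}=\mu$ and, for $k\ge1$, with $N_{k-1}=2^{k-1}(n-1)+1$ and $N_k=2^k(n-1)+1$, $\mu^{(k)}(a_1,\ldots,a_{N_k})=\mu^{(k-1)}\big(\mu^{(k-1)}(a_1,\ldots,a_{N_{k-1}}),\alpha^{2^{k-1}}(a_{N_{k-1}+1}),\ldots,\alpha^{2^{k-1}}(a_{N_k})\big)$. Then for each $k\ge0$, $A^k=(A,\mu^{(k)},\alpha^{2^k})$ (all twisting maps equal to $\alpha^{2^k}$) is a multiplicative $(2^k(n-1)+1)$-ary totally Hom-associative algebra.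
   Context: An $m$-ary Hom-algebra $(V,\mu,(\alpha_1,\ldots,\alpha_{m-1}))$ is a vector space $V$ with an $m$-linear map $\mu$ (written $\mu(a_1,\ldots,a_m)=(a_1\cdots a_m)$) and linear maps $\alpha_i\colon V\to V$. It is multiplicative if all $\alpha_i$ equal one map $\alpha$ and $\alpha\circ\mu=\mu\circ\alpha^{\otimes m}$. It is $m$-ary totally Hom-associative if for every $i\in\{1,\ldots,m-1\}$ and all $a_1,\ldots,a_{2m-1}$: $(\alpha_1(a_1),\ldots,\alpha_{i-1}(a_{i-1}),(a_i\cdots a_{i+m-1}),\alpha_i(a_{i+m}),\ldots,\alpha_{m-1}(a_{2m-1}))=(\alpha_1(a_1),\ldots,\alpha_i(a_i),(a_{i+1}\cdots a_{i+m}),\alpha_{i+1}(a_{i+m+1}),\ldots,\alpha_{m-1}(a_{2m-1}))$. *)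

(* Defs.v *)
From HB Require Import structures.
From mathcomp Require Import all_boot all_order all_algebra.
Set Implicit Arguments. Unset Strict Implicit. Unset Printing Implicit Defensive.
Import GRing.Theory.
Local Open Scope ring_scope.

Section HomAlg.
Variables (K : fieldType) (V : lmodType K).

(* Extension of a finite family of arguments a_0..a_{P-1} to a nat-indexed
   sequence (padded with 0, never read beyond P-1 below). *)
Definition ext (P : nat) (a : 'I_P -> V) : nat -> V :=
  fun i => match insub i with Some j => a j | None => 0 end.

Definition multilinear (m : nat) (mu : ('I_m -> V) -> V) : Prop :=
  forall (i : 'I_m) (a : 'I_m -> V) (c : K) (x y : V),
    mu (fun j => if j == i then c *: x + y else a j)
    = c *: mu (fun j => if j == i then x else a j)
      + mu (fun j => if j == i then y else a j).

Definition lin_map (f : V -> V) : Prop :=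
  forall (c : K) (x y : V), f (c *: x + y) = c *: f x + f y.

Definition hom_algebra (m : nat) (mu : ('I_m -> V) -> V) (alpha : V -> V) : Prop :=
  multilinear mu /\ lin_map alpha.

Definition multiplicative (m : nat) (mu : ('I_m -> V) -> V) (alpha : V -> V) :=
  forall a : 'I_m -> V, alpha (mu a) = mu (fun j => alpha (a j)).

(* The bracketing with the inner product at 0-based position p:
   (alpha(b_0),...,alpha(b_{p-1}), (b_p ... b_{p+m-1}), alpha(b_{p+m}),...,alpha(b_{2m-2})) *)
Definition assoc_at (m : nat) (mu : ('I_m -> V) -> V) (alpha : V -> V)
    (p : nat) (b : nat -> V) : V :=
  mu (fun j : 'I_m =>
        if (j < p)%N then alpha (b j)
        else if j == p :> nat then mu (fun l : 'I_m => b (p + l)%N)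
        else alpha (b (j + m - 1)%N)).

(* m-ary totally Hom-associative (all twisting maps equal to alpha):
   for every i in {1,...,m-1} (0-based p = i-1) the two bracketings agree. *)
Definition total_hom_assoc (m : nat) (mu : ('I_m -> V) -> V) (alpha : V -> V) : Prop :=
  forall (p : nat), (p.+1 < m)%N ->
  forall a : 'I_(2 * m - 1) -> V,
    assoc_at mu alpha p (ext a) = assoc_at mu alpha p.+1 (ext a).

Definition mult_total_hom_assoc_algebra (m : nat) (mu : ('I_m -> V) -> V)
    (alpha : V -> V) : Prop :=
  [/\ hom_algebra mu alpha, multiplicative mu alpha & total_hom_assoc mu alpha].

Definition arity (n k : nat) : nat := (2 ^ k * (n - 1) + 1)%N.

(* mu^(k) acting on a nat-indexed sequence of arguments (reads only indices
   < arity n k):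
   mu^(0) = mu,
   mu^(k+1)(a) = mu^(k)(mu^(k)(a_0..a_{N_k-1}), alpha^{2^k}(a_{N_k}),...,alpha^{2^k}(a_{2N_k-2})) *)
Fixpoint muS (n : nat) (mu : ('I_n -> V) -> V) (alpha : V -> V) (k : nat)
    (a : nat -> V) : V :=
  match k with
  | 0 => mu (fun j : 'I_n => a j)
  | k'.+1 =>
      muS mu alpha k' (fun j => if j == 0%N then muS mu alpha k' a
                                else iter (2 ^ k') alpha (a (arity n k' - 1 + j)%N))
  end.

Definition mu_k (n : nat) (mu : ('I_n -> V) -> V) (alpha : V -> V) (k : nat)
    : ('I_(arity n k) -> V) -> V :=
  fun a => muS mu alpha k (ext a).

End HomAlg.
Arguments mu_k {K V n} mu alpha k _.
Arguments muS {K V n} mu alpha k a.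

(* Main.v *)
Require Import Defs.
From mathcomp Require Import all_boot all_order all_algebra.
From mathcomp Require Import zify.
From Stdlib Require Import FunctionalExtensionality.
Set Implicit Arguments. Unset Strict Implicit.
Import GRing.Theory.

Definition mmu {K : fieldType} {V : lmodType K} (m : nat) (mu : ('I_m -> V) -> V) (x : nat -> V) : V :=
  mu (fun j : 'I_m => x j).

Fixpoint PP {K : fieldType} {V : lmodType K} (m : nat) (mu : ('I_m -> V) -> V) (alpha : V -> V) (r : nat) (x : nat -> V) : V :=
  match r with
  | 0 => x 0%N
  | r'.+1 => mmu mu (fun k => if k == 0%N then PP mu alpha r' x else iter r' alpha (x (r' * (m - 1) + k)%N))
  end.

Definition blk {V : Type} (p L : nat) (g : V -> V) (F : V) (b : nat -> V) : nat -> V :=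
  fun k => if (k < p)%N then g (b k) else if k == p then F else g (b (k + L - 1)%N).

Definition shift {V : Type} (p : nat) (b : nat -> V) : nat -> V := fun l => b (p + l)%N.

Lemma mmu_congr {K : fieldType} {V : lmodType K} m (mu : ('I_m -> V) -> V) (x y : nat -> V) :
  (forall k, (k < m)%N -> x k = y k) -> mmu mu x = mmu mu y.
Proof. move=> H; rewrite /mmu; f_equal; apply: functional_extensionality => j; exact: H. Qed.

Lemma P_dep {K : fieldType} {V : lmodType K} m (mu : ('I_m -> V) -> V) alpha r (x y : nat -> V) :
  (0 < m)%N -> (forall k, (k <= r * (m - 1))%N -> x k = y k) -> PP mu alpha r x = PP mu alpha r y.
Proof.
move=> m0; elim: r x y => [|r IH] x y H /=; first by apply: H.
apply: mmu_congr => k km; case: eqP => [_|k0].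
  by apply: IH => i Hi; apply: H; lia.
by rewrite H //; lia.
Qed.

Lemma iter_comm {T} (f : T -> T) a b x : iter a f (iter b f x) = iter b f (iter a f x).
Proof. by rewrite -!iterD addnC. Qed.

Lemma iter_mmu {K : fieldType} {V : lmodType K} m (mu : ('I_m -> V) -> V) alpha t x :
  Defs.multiplicative mu alpha ->
  iter t alpha (mmu mu x) = mmu mu (fun k => iter t alpha (x k)).
Proof.
move=> Hm; elim: t => [|t IH] //=; rewrite IH /mmu Hm //.
Qed.

Lemma P_iter {K : fieldType} {V : lmodType K} m (mu : ('I_m -> V) -> V) alpha t r x :
  Defs.multiplicative mu alpha ->
  iter t alpha (PP mu alpha r x) = PP mu alpha r (fun k => iter t alpha (x k)).
Proof.
move=> Hm; elim: r x => [|r IH] x //=.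
rewrite iter_mmu //; apply: mmu_congr => k _; case: eqP => _ //.
by rewrite iter_comm.
Qed.

Lemma ext_res {K : fieldType} {V : lmodType K} P (b : nat -> V) i :
  (i < P)%N -> ext (fun j : 'I_P => b j) i = b i.
Proof. by move=> H; rewrite /ext; case: insubP => [j _ -> //|]; rewrite H. Qed.

Lemma S_lem {K : fieldType} {V : lmodType K} m (mu : ('I_m -> V) -> V) alpha i v :
  total_hom_assoc mu alpha -> (i < m)%N ->
  mmu mu (blk i m alpha (mmu mu (shift i v)) v) = mmu mu (blk 0 m alpha (mmu mu v) v).
Proof.
move=> H.
have E : forall p b, (p < m)%N -> mmu mu (blk p m alpha (mmu mu (shift p b)) b)
   = assoc_at mu alpha p (ext (fun i : 'I_(2 * m - 1) => b i)).
  move=> p b pm; rewrite /assoc_at /mmu; f_equal; apply: functional_extensionality => j.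
  have km := ltn_ord j; rewrite /blk.
  case: ltnP => kp; first by rewrite ext_res //; lia.
  case: eqP => kp2; last by rewrite ext_res //; lia.
  by f_equal; apply: functional_extensionality => l; have lm := ltn_ord l; rewrite /shift ext_res //; lia.
elim: i => [|i IH] im; first by [].
rewrite E // -H // -E; last lia.
by apply: IH; lia.
Qed.

Ltac glia := rewrite ?mulSn; repeat match goal with |- context [?a * ?b] => let q := fresh "q" in generalize (a * b) => q end; lia.

Lemma Z_lem {K : fieldType} {V : lmodType K} m (mu : ('I_m -> V) -> V) alpha a b y :
  (0 < m)%N ->
  PP mu alpha a (fun k => if k == 0%N then PP mu alpha b y else iter b alpha (y (b * (m - 1) + k)%N))
  = PP mu alpha (a + b) y.
Proof.
move=> m0; elim: a => [|a IH] /=; first by rewrite add0n.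
rewrite IH; apply: mmu_congr => k km; case: eqP => // k0.
case: k k0 km => // k _ _; rewrite addnS /=.
rewrite iterD; do 3 f_equal; rewrite mulnDl; lia.
Qed.

Lemma K_lem {K : fieldType} {V : lmodType K} m (mu : ('I_m -> V) -> V) alpha s i x :
  (0 < m)%N -> total_hom_assoc mu alpha -> (i < m)%N ->
  mmu mu (blk i (s * (m - 1) + 1) (iter s alpha) (PP mu alpha s (shift i x)) x) = PP mu alpha s.+1 x.
Proof.
move=> m0 Ht; elim: s i x => [|s IH] i x im.
  apply: mmu_congr => k km; rewrite /blk /shift /=.
  repeat case: ifP => /= ?; try (f_equal; lia).
set v := blk i (s * (m - 1) + 1) (iter s alpha) (PP mu alpha s (shift i x)) x.
transitivity (mmu mu (blk i m alpha (mmu mu (shift i v)) v)).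
  apply: mmu_congr => k km; rewrite /v /blk.
  case: ifP => h1; first by [].
  case: ifP => h2.
    rewrite /=; apply: mmu_congr => l lm; rewrite /shift /blk.
    case: eqP => h3.
      by subst l; rewrite addn0 ltnn eqxx.
    rewrite ifF; last by lia.
    rewrite ifF; last by apply/eqP; lia.
    do 2 f_equal; glia.
  rewrite ifF; last by lia.
  rewrite ifF; last by apply/eqP; lia.
  rewrite /=; do 3 f_equal; glia.
rewrite S_lem //; rewrite [PP _ _ s.+2 _]/=; apply: mmu_congr => k km; rewrite {1}/blk.
case: eqP => k0; first by subst k; rewrite /v IH.
rewrite ltn0 /v /blk ifF; last by lia.
rewrite ifF; last by apply/eqP; lia.
do 3 f_equal; glia.
Qed.

Lemma M_lem {K : fieldType} {V : lmodType K} m (mu : ('I_m -> V) -> V) alpha r s j y :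
  (0 < m)%N -> Defs.multiplicative mu alpha -> total_hom_assoc mu alpha -> (j <= r * (m - 1))%N ->
  PP mu alpha r (blk j (s * (m - 1) + 1) (iter s alpha) (PP mu alpha s (shift j y)) y)
  = PP mu alpha (r + s) y.
Proof.
move=> m0 Hm Ht; elim: r j y => [|r IH] j y hj.
  rewrite mul0n leqn0 in hj; move/eqP: hj => ->.
  rewrite add0n; change (blk 0 (s*(m-1)+1) (iter s alpha) (PP mu alpha s (shift 0 y)) y 0 = PP mu alpha s y).
  rewrite /blk ltnn eqxx.
  by f_equal; apply: functional_extensionality => l; rewrite /shift add0n.
rewrite addSn [PP _ _ (r + s).+1 _]/= [PP _ _ r.+1 _]/= mulSn in hj *.
set q := r * (m - 1) in hj *; set p := s * (m - 1).
case: (leqP j q) => hjr.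
  apply: mmu_congr => k km; case: eqP => k0; first by rewrite IH.
  rewrite /blk ifF; last by lia.
  rewrite ifF; last by apply/eqP; lia.
  rewrite iterD; do 3 f_equal; rewrite mulnDl -/q -/p; lia.
set t := j - q.
set u := fun k => if k == 0%N then PP mu alpha r y else iter r alpha (y (r * (m - 1) + k)%N).
have uE : forall k, k != 0%N -> u k = iter r alpha (y (q + k)%N) by move=> k /negbTE; rewrite /u => ->.
transitivity (mmu mu (blk t (s * (m - 1) + 1) (iter s alpha) (PP mu alpha s (shift t u)) u)).
  apply: mmu_congr => k km; case: eqP => k0.
    subst k; rewrite /blk ifT; last by lia.
    have -> : u 0%N = PP mu alpha r y by [].
    rewrite P_iter //; apply: P_dep => // i hi; rewrite ifT //; lia.
  rewrite /blk; case: ifP => h1.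
    rewrite ifT; last by lia.
    by rewrite uE; [exact: iter_comm | apply/eqP].
  case: ifP => h2.
    rewrite ifF; last by lia.
    rewrite ifT; last by apply/eqP; lia.
    rewrite P_iter //; f_equal; apply: functional_extensionality => l.
    rewrite /shift uE; last by apply/eqP; lia.
    do 2 f_equal; lia.
  rewrite ifF; last by lia.
  rewrite ifF; last by apply/eqP; lia.
  rewrite uE; last by apply/eqP; lia.
  rewrite iter_comm; do 3 f_equal; rewrite -/q -/p; lia.
rewrite K_lem //; last by lia.
by rewrite Z_lem // addSn addnC.
Qed.


Lemma mmu_lin {K : fieldType} {V : lmodType K} m (mu : ('I_m -> V) -> V) (i : nat) (f : nat -> V) c X Y :
  multilinear mu -> (i < m)%N ->
  mmu mu (fun k => if k == i then (c *: X + Y)%R else f k)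
  = (c *: mmu mu (fun k => if k == i then X else f k) + mmu mu (fun k => if k == i then Y else f k))%R.
Proof. move=> Hml im; exact: (Hml (Ordinal im) (fun j => f j) c X Y). Qed.

Lemma iter_lin {K : fieldType} {V : lmodType K} (alpha : V -> V) t :
  lin_map alpha -> lin_map (iter t alpha).
Proof.
move=> Hl; elim: t => [|t IH] c x y //=.
by rewrite IH Hl.
Qed.

Lemma P_lin {K : fieldType} {V : lmodType K} m (mu : ('I_m -> V) -> V) alpha r i x c X Y :
  (0 < m)%N -> multilinear mu -> lin_map alpha -> (i <= r * (m - 1))%N ->
  PP mu alpha r (fun k => if k == i then (c *: X + Y)%R else x k)
  = (c *: PP mu alpha r (fun k => if k == i then X else x k)
     + PP mu alpha r (fun k => if k == i then Y else x k))%R.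
Proof.
move=> m0 Hml Hl; elim: r i => [|r IH] i hi.
  by rewrite mul0n leqn0 in hi; move/eqP: hi => -> /=.
rewrite [PP _ _ r.+1 _]/= [PP _ _ r.+1 (fun k => if k == i then X else x k)]/=
        [PP _ _ r.+1 (fun k => if k == i then Y else x k)]/=.
rewrite mulSn in hi.
set q := r * (m - 1) in hi *.
case: (leqP i q) => h.
  transitivity (mmu mu (fun k => if k == 0%N then
      (c *: PP mu alpha r (fun k => if k == i then X else x k)
        + PP mu alpha r (fun k => if k == i then Y else x k))%R
      else iter r alpha (x (q + k)%N))).
    apply: mmu_congr => k km; case: eqP => k0; first by rewrite IH.
    by rewrite ifF //; apply/eqP; lia.
  rewrite mmu_lin //; congr (_ *: _ + _)%R; apply: mmu_congr => k km;
    (case: eqP => k0; [by [] | by rewrite ifF //; apply/eqP; lia]).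
set k0 := i - q.
have E : forall Z, PP mu alpha r (fun k => if k == i then Z else x k) = PP mu alpha r x.
  by move=> Z; apply: P_dep => // k hk; rewrite ifF //; apply/eqP; lia.
rewrite !E.
transitivity (mmu mu (fun k => if k == k0 then (c *: iter r alpha X + iter r alpha Y)%R
   else if k == 0%N then PP mu alpha r x else iter r alpha (x (q + k)%N))).
  apply: mmu_congr => k km.
  have [->|kz] := eqVneq k 0%N.
    by rewrite ifF //; apply/eqP; lia.
  rewrite ?(negbTE kz); have [ek|ek] := eqVneq k k0.
    by rewrite ek ifT ?iter_lin //; apply/eqP; lia.
  by rewrite ifF //; apply/eqP; lia.
rewrite mmu_lin //; last by lia.
congr (_ *: _ + _)%R; apply: mmu_congr => k km.
- have [->|kz] := eqVneq k 0%N.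
    by rewrite ifF //; apply/eqP; lia.
  rewrite ?(negbTE kz); have [ek|ek] := eqVneq k k0.
    by rewrite ek ifT //; apply/eqP; lia.
  by rewrite ifF //; apply/eqP; lia.
- have [->|kz] := eqVneq k 0%N.
    by rewrite ifF //; apply/eqP; lia.
  rewrite ?(negbTE kz); have [ek|ek] := eqVneq k k0.
    by rewrite ek ifT //; apply/eqP; lia.
  by rewrite ifF //; apply/eqP; lia.
Qed.

Lemma muS_P {K : fieldType} {V : lmodType K} n (mu : ('I_n -> V) -> V) alpha k x :
  (0 < n)%N -> muS mu alpha k x = PP mu alpha (2 ^ k) x.
Proof.
move=> n0; elim: k x => [|k IH] x.
  rewrite expn0 /=; apply: mmu_congr => j _; case: eqP => [->|] //.
rewrite /= !IH expnS mul2n -addnn -Z_lem //.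
by rewrite /arity addnK.
Qed.

Lemma ext_lt {K : fieldType} {V : lmodType K} P (a : 'I_P -> V) i (h : (i < P)%N) :
  ext a i = a (Ordinal h).
Proof.
rewrite /ext; case: insubP => [j _ ej|]; last by rewrite h.
by f_equal; apply: val_inj.
Qed.

Lemma ext_upd {K : fieldType} {V : lmodType K} P (a : 'I_P -> V) (i : 'I_P) v :
  ext (fun j => if j == i then v else a j) = (fun k => if k == nat_of_ord i then v else ext a k).
Proof.
apply: functional_extensionality => k; rewrite /ext; case: insubP => [j _ <-|hk] //.
case: eqP => // e; move: (ltn_ord i); rewrite -e => h; by rewrite h in hk.
Qed.

Local Open Scope ring_scope.

Theorem corollary3p2 (K : fieldType) (V : lmodType K) (n : nat)
    (mu : ('I_n -> V) -> V) (alpha : V -> V) :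
  [pchar K] =i pred0 ->
  (2 <= n)%N ->
  mult_total_hom_assoc_algebra mu alpha ->
  forall k : nat,
    mult_total_hom_assoc_algebra (mu_k mu alpha k) (iter (2 ^ k) alpha).
Proof.
move=> _ n2 [[Hml Hla] Hmu Hta] k.
have n0 : (0 < n)%N by lia.
have ar : forall i, (i < arity n k)%N -> (i <= 2 ^ k * (n - 1))%N.
  by move=> i; rewrite /arity addn1 ltnS.
split.
- split.
  + move=> i a c x y; rewrite /mu_k !muS_P // !ext_upd.
    by apply: P_lin => //; apply: ar.
  + exact: iter_lin.
- move=> a; rewrite /mu_k !muS_P // P_iter //; apply: P_dep => // i hi.
  have hi' : (i < arity n k)%N by rewrite /arity addn1 ltnS.
  by rewrite !(ext_lt _ hi').
- move=> p hp a.
  have key : forall q, (q < arity n k)%N ->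
      assoc_at (mu_k mu alpha k) (iter (2 ^ k) alpha) q (ext a)
      = PP mu alpha (2 ^ k + 2 ^ k)%N (ext a).
    move=> q hq; rewrite -(@M_lem _ _ n mu alpha (2 ^ k)%N (2 ^ k)%N q) //; last exact: ar.
    rewrite /assoc_at /mu_k muS_P //; apply: P_dep => // i hi.
    have hi' : (i < arity n k)%N by rewrite /arity addn1 ltnS.
    rewrite (ext_lt _ hi') /= /blk.
    case: ifP => // h1; case: ifP => // h2.
    rewrite muS_P //; apply: P_dep => // l hl.
    have hl' : (l < arity n k)%N by rewrite /arity addn1 ltnS.
    by rewrite (ext_lt _ hl').
  rewrite !key //; lia.
Qed.
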